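(* Let $(E,\tau)$ be a convex space. Then $(E,\tau)$ is uniquely generated (in the sense that every $X\subseteq E$ has exactly one inclusion-minimal subset $B\subseteq X$ with $\tau(B)=\tau(X)$) if and only if $\tau(X)=\tau(EX(X))$ for every $X\subseteq E$, where $EX(X)=\{x\in X:\tau(X)\neq\tau(X-\{x\})\}$.
   Context: $E$ is a finite set and $\tau:2^E\to 2^E$. $(E,\tau)$ is a convex space if (C1) $Y\subseteq\tau(Y)$ for all $Y\subseteq E$, and (convexity) for all $Y_1\subseteq Y_2\subseteq Y_3\subseteq E$ with $\tau(Y_1)=\tau(Y_3)$ we have $\tau(Y_2)=\tau(Y_1)$. *)

(* Defs.v *)
From mathcomp Require Import all_boot.
Set Implicit Arguments. Unset Strict Implicit. Unset Printing Implicit Defensive.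

Definition convex_space (E : finType) (tau : {set E} -> {set E}) : Prop :=
  (forall Y : {set E}, Y \subset tau Y) /\
  (forall Y1 Y2 Y3 : {set E}, Y1 \subset Y2 -> Y2 \subset Y3 ->
     tau Y1 = tau Y3 -> tau Y2 = tau Y1).

Definition minimal_generator (E : finType) (tau : {set E} -> {set E})
    (X B : {set E}) : Prop :=
  B \subset X /\ tau B = tau X /\
  (forall C : {set E}, C \subset B -> tau C = tau X -> C = B).

Definition uniquely_generated (E : finType) (tau : {set E} -> {set E}) : Prop :=
  forall X : {set E}, exists! B : {set E}, minimal_generator tau X B.

Definition EX (E : finType) (tau : {set E} -> {set E}) (X : {set E}) : {set E} :=
  [set x in X | tau X != tau (X :\ x)].

(* Main.v *)
Require Import Defs.
From mathcomp Require Import all_boot.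

Lemma ex_sub (E : finType) (tau : {set E} -> {set E}) (X B : {set E}) :
  convex_space tau -> B \subset X -> tau B = tau X -> EX tau X \subset B.
Proof.
move=> [_ conv] sBX eBX; apply/subsetP => x; rewrite inE => /andP[xX ne].
apply/negPn/negP => xB.
have sB: B \subset X :\ x.
  apply/subsetP => y yB; rewrite !inE (subsetP sBX _ yB) andbT.
  by apply/eqP => yx; move: xB; rewrite -yx yB.
have h := conv B (X :\ x) X sB (subsetDl _ _) eBX.
by rewrite h eBX eqxx in ne.
Qed.

Theorem mainTheorem15 (E : finType) (tau : {set E} -> {set E}) :
  convex_space tau ->
  (uniquely_generated tau <-> forall X : {set E}, tau X = tau (EX tau X)).
Proof.
move=> cs; split.
- move=> ug X.
  have [B [[sBX [eBX minB]] uB]] := ug X.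
  suff ->: EX tau X = B by rewrite eBX.
  apply/eqP; rewrite eqEsubset (ex_sub _ _ _ _ cs sBX eBX) /=.
  apply/subsetP => x xB; rewrite inE (subsetP sBX _ xB) /=.
  apply/negP => /eqP ex.
  have [B' [[sB' [eB' minB']] _]] := ug (X :\ x).
  have mB': minimal_generator tau X B'.
    split; first exact: subset_trans sB' (subsetDl _ _).
    split; first by rewrite eB' ex.
    by move=> C sC eC; apply: minB' => //; rewrite eC ex.
  have := uB B' mB'; move=> BB'; rewrite BB' in xB.
  by move: (subsetP sB' _ xB); rewrite !inE eqxx.
- move=> h X; exists (EX tau X).
  have sEX: EX tau X \subset X by apply/subsetP => x; rewrite inE => /andP[].
  split.
    split=> //; split; first by rewrite -h.
    move=> C sC eC; apply/eqP; rewrite eqEsubset sC /=.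
    exact: ex_sub _ _ _ _ cs (subset_trans sC sEX) eC.
  move=> B [sBX [eBX minB]]; apply: minB; first exact: ex_sub.
  by rewrite -h.
Qed.
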